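(* Let $\Gamma=(\gamma_{ij})\in(\mathcal{K}_\infty\cup\{0\})^{N\times N}$ be irreducible, $\mu=(\mu_1,\dots,\mu_N)$ with $\mu_i$ monotone aggregation functions, and $\Gamma_\mu$ the induced operator. Let $\kappa_0>0$, $\kappa_\Gamma>\kappa_h>0$, $\delta>0$, let $\phi$ be as in the context, and let $c\in\mathbb{R}^N$ with $c\gg0$ and $\|c\|<\kappa_\Gamma/2$. Let $\tau=\langle y^1,\dots,y^{N+1}\rangle$, $y^j=(v^j,t_j)$, $y^1<\dots<y^{N+1}$, be an $N$-simplex of $\tilde K_1(\delta)$ lying on the boundary of the positive orthant, i.e. $v^j\in\mathbb{R}^N_+$ for all $j$ and there is an index $i^*$ with $v^j_{i^*}=0$ for all $j=1,\dots,N+1$. If $\|v^{N+1}\|<\kappa_0+\kappa_\Gamma$, then $\tau$ is not complete.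
   Context: Order on $\mathbb{R}^N$: $v\ge w$ iff $v_i\ge w_i$ for all $i$; $v>w$ iff $v\ge w$, $v\ne w$; $v\gg w$ iff $v_i>w_i$ for all $i$. $\|\cdot\|$ Euclidean norm, $e=(1,\dots,1)^\top$. $\mathcal{K}_\infty$: continuous, strictly increasing, unbounded $\gamma:\mathbb{R}_+\to\mathbb{R}_+$ with $\gamma(0)=0$; $0$ denotes the zero function. A monotone aggregation function is a continuous $\mu_i:\mathbb{R}^N_+\to\mathbb{R}_+$ with $\mu_i(s)=0$ iff $s=0$, $\mu_i(s)<\mu_i(t)$ whenever $s\ll t$, and $\mu_i(s)\to\infty$ as $\|s\|\to\infty$. The induced operator is $\Gamma_\mu(s)_i=\mu_i(\gamma_{i1}(s_1),\dots,\gamma_{iN}(s_N))$; it is monotone with $\Gamma_\mu(0)=0$. $\Gamma$ is irreducible if the $0$-$1$ matrix $A$ with $a_{ij}=1$ iff $\gamma_{ij}\not\equiv0$ is irreducible (equivalently the directed graph with an edge $j\to i$ iff $\gamma_{ij}\not\equiv 0$ is strongly connected). Given $\kappa_0>0$, $\kappa_\Gamma>\kappa_h>0$, $\phi(v)=\Gamma_\mu(v)\big(1+\min\{0,\frac{\kappa_\Gamma-2\|v\|}{\|v\|+\kappa_0}\}\big)+\max\{0,\kappa_h-2\|v\|\}e$ for $v\in\mathbb{R}^N_+$. Triangulation $\tilde K_1(\delta)$: with $P=\mathrm{diag}(\delta,\dots,\delta,1)$, its $(N+1)$-simplices are $\langle y^1,\dots,y^{N+2}\rangle$ with $y^1=(\delta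 z,0)$, $z\in\mathbb{Z}^N$, $y^{i+1}=y^i+Pe_{\pi(i)}$ for a permutation $\pi$ of $\{1,\dots,N+1\}$; all vertices lie in $\mathbb{R}^N\times\{0,1\}$ and are componentwise increasing. Its $N$-simplices are the facets of these. Homotopy $\vartheta(v,t)=(1-t)c+t\phi(v)$; labeling $l(v,t)=\vartheta(v,t)-v$. Labeling matrix $L(\tau)$: $(N+1)\times(N+1)$ with $j$-th column $(1,l(y^j)^\top)^\top$. $W\succ0$ (lexicographically positive) means the first nonzero entry of each row of $W$ is positive. $\tau$ is complete if $L(\tau)W=I_{N+1}$ has a solution $W\succ0$. *)

(* Defs.v *)
From HB Require Import structures.
From mathcomp Require Import all_boot all_order all_algebra all_fingroup.
Set Implicit Arguments. Unset Strict Implicit. Unset Printing Implicit Defensive.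
Import Order.TTheory GRing.Theory Num.Theory.
Local Open Scope ring_scope.

Section Defs.
Variable R : rcfType.

Definition enorm (N : nat) (v : 'rV[R]_N) : R := Num.sqrt (\sum_(i < N) v 0 i ^+ 2).

Definition nonneg_vec (N : nat) (v : 'rV[R]_N) : Prop := forall i, 0 <= v 0 i.

(* class K_infinity, for functions R_+ -> R_+ represented as R -> R *)
Definition Kinf (g : R -> R) : Prop :=
  [/\ (forall x, 0 <= x -> forall e, 0 < e -> exists2 d, 0 < d &
          forall y, 0 <= y -> `|y - x| < d -> `|g y - g x| < e),
      (forall x y, 0 <= x -> x < y -> g x < g y),
      (forall M, exists2 x, 0 <= x & M < g x),
      g 0 = 0 &
      (forall x, 0 <= x -> 0 <= g x)].

Definition Kinf_or_zero (g : R -> R) : Prop :=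
  Kinf g \/ (forall x, 0 <= x -> g x = 0).

Definition mono_aggr (N : nat) (mu : 'rV[R]_N -> R) : Prop :=
  [/\ (forall s : 'rV[R]_N, nonneg_vec s -> forall e, 0 < e -> exists2 d, 0 < d &
          forall t : 'rV[R]_N, nonneg_vec t -> enorm (t - s) < d -> `|mu t - mu s| < e),
      (forall s : 'rV[R]_N, nonneg_vec s -> 0 <= mu s),
      (forall s : 'rV[R]_N, nonneg_vec s -> (mu s = 0 <-> s = 0)),
      (forall s t : 'rV[R]_N, nonneg_vec s -> (forall i, s 0 i < t 0 i) -> mu s < mu t) &
      (forall M, exists K, forall s : 'rV[R]_N, nonneg_vec s -> K < enorm s -> M < mu s)].

Inductive reach (N : nat) (E : 'I_N -> 'I_N -> Prop) : 'I_N -> 'I_N -> Prop :=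
| reach_refl a : reach E a a
| reach_step a b c : E a b -> reach E b c -> reach E a c.

(* Gamma irreducible: the graph with an edge j -> i iff gamma_ij is not
   identically zero (on R_+) is strongly connected *)
Definition Gamma_irreducible (N : nat) (gam : 'I_N -> 'I_N -> R -> R) : Prop :=
  forall a b : 'I_N,
    reach (fun j i => exists2 s, 0 <= s & gam i j s <> 0) a b.

Definition Gamma_mu (N : nat) (gam : 'I_N -> 'I_N -> R -> R)
    (mu : 'I_N -> 'rV[R]_N -> R) (s : 'rV[R]_N) : 'rV[R]_N :=
  \row_i mu i (\row_j gam i j (s 0 j)).

Definition phi (N : nat) (gam : 'I_N -> 'I_N -> R -> R)
    (mu : 'I_N -> 'rV[R]_N -> R) (k0 kG kh : R) (v : 'rV[R]_N) : 'rV[R]_N :=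
  (1 + Num.min 0 ((kG - 2 * enorm v) / (enorm v + k0))) *: Gamma_mu gam mu v
  + Num.max 0 (kh - 2 * enorm v) *: const_mx 1.

Definition theta (N : nat) (gam : 'I_N -> 'I_N -> R -> R)
    (mu : 'I_N -> 'rV[R]_N -> R) (k0 kG kh : R) (c : 'rV[R]_N)
    (y : 'rV[R]_N * R) : 'rV[R]_N :=
  (1 - y.2) *: c + y.2 *: phi gam mu k0 kG kh y.1.

Definition label (N : nat) (gam : 'I_N -> 'I_N -> R -> R)
    (mu : 'I_N -> 'rV[R]_N -> R) (k0 kG kh : R) (c : 'rV[R]_N)
    (y : 'rV[R]_N * R) : 'rV[R]_N :=
  theta gam mu k0 kG kh c y - y.1.

(* vertices of the (N+1)-simplex of K~_1(delta) determined by z and pi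
   (0-indexed: vertex 0 = (delta z, 0),
    vertex (m+1) = vertex m + P e_{pi(m)}; coordinate ord_max is t) *)
Definition K1_vertex (N : nat) (delta : R) (z : 'I_N -> int) (pi : 'S_N.+1)
    (m : 'I_N.+2) : 'rV[R]_N * R :=
  (\row_j (delta * (z j)%:~R +
      \sum_(i < N.+1 | (i < m)%N) (pi i == widen_ord (leqnSn N) j)%:R * delta),
   \sum_(i < N.+1 | (i < m)%N) (pi i == ord_max)%:R).

(* y = (y^1,...,y^{N+1}) (in increasing order) are the vertices of an
   N-simplex of K~_1(delta), i.e. a facet of one of its (N+1)-simplices *)
Definition K1_Nsimplex (N : nat) (delta : R) (y : 'I_N.+1 -> 'rV[R]_N * R) : Prop :=
  exists (z : 'I_N -> int) (pi : 'S_N.+1) (k : 'I_N.+2),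
    forall j : 'I_N.+1, y j = K1_vertex delta z pi (lift k j).

Definition label_matrix (N : nat) (gam : 'I_N -> 'I_N -> R -> R)
    (mu : 'I_N -> 'rV[R]_N -> R) (k0 kG kh : R) (c : 'rV[R]_N)
    (y : 'I_N.+1 -> 'rV[R]_N * R) : 'M[R]_N.+1 :=
  \matrix_(i < N.+1, j < N.+1)
    match unlift ord0 i with
    | Some k => label gam mu k0 kG kh c (y j) 0 k
    | None => 1
    end.

Definition lexpos (n : nat) (W : 'M[R]_n) : Prop :=
  forall i : 'I_n, exists j : 'I_n,
    0 < W i j /\ forall k : 'I_n, (k < j)%N -> W i k = 0.

Definition complete (N : nat) (gam : 'I_N -> 'I_N -> R -> R)
    (mu : 'I_N -> 'rV[R]_N -> R) (k0 kG kh : R) (c : 'rV[R]_N)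
    (y : 'I_N.+1 -> 'rV[R]_N * R) : Prop :=
  exists W : 'M[R]_N.+1, label_matrix gam mu k0 kG kh c y *m W = 1%:M /\ lexpos W.

End Defs.

(* Main.v *)
Require Import Defs.
From HB Require Import structures.
From mathcomp Require Import all_boot all_order all_algebra all_fingroup.
From mathcomp Require Import lra.
Import Order.TTheory GRing.Theory Num.Theory.
Local Open Scope ring_scope.

Section Helpers.
Variable R : rcfType.

Lemma subsum_le (n : nat) (m m' : nat) (F : 'I_n -> R) :
  (forall i, 0 <= F i) -> (m <= m')%N ->
  \sum_(i < n | (i < m)%N) F i <= \sum_(i < n | (i < m')%N) F i.
Proof.
move=> F0 le; rewrite [X in X <= _]big_mkcond [X in _ <= X]big_mkcond /=.
apply: ler_sum => i _.
case: ifP => h1; first by rewrite (leq_trans h1 le).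
by case: ifP.
Qed.

Lemma K1_t01 N (delta : R) z pi (m : 'I_N.+2) :
  0 <= (K1_vertex delta z pi m).2 <= 1.
Proof.
rewrite /K1_vertex /=; apply/andP; split.
  by apply: sumr_ge0 => i _; rewrite ler0n.
apply: (le_trans (y := \sum_(i < N.+1 | (i < N.+2)%N) (pi i == ord_max)%:R)).
  apply: subsum_le => [i|]; first by rewrite ler0n.
  exact: ltnW (ltn_ord m).
rewrite (eq_bigl xpredT); last by move=> i; rewrite /= ltnS ltnW.
rewrite (reindex_inj (@perm_inj _ pi^-1)) /=.
under eq_bigr do rewrite permKV.
rewrite (bigD1 ord_max) //= eqxx big1 ?addr0 //.
by move=> i /negbTE ->.
Qed.

Lemma K1_mono N (delta : R) z pi (m m' : 'I_N.+2) (i : 'I_N) :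
  0 < delta -> (m <= m')%N ->
  (K1_vertex delta z pi m).1 0 i <= (K1_vertex delta z pi m').1 0 i.
Proof.
move=> d0 le; rewrite /K1_vertex /= !mxE lerD2l.
apply: subsum_le => // k; apply: mulr_ge0; [by rewrite ler0n | exact: ltW].
Qed.

Lemma enorm_le N (a b : 'rV[R]_N) :
  (forall i, 0 <= a 0 i) -> (forall i, a 0 i <= b 0 i) -> enorm a <= enorm b.
Proof.
move=> a0 ab; rewrite /enorm; apply: ler_wsqrtr; apply: ler_sum => i _.
by apply: lerXn2r; rewrite ?nnegrE ?a0 ?(le_trans (a0 i)).
Qed.

Lemma enorm0 N (a : 'rV[R]_N) : (forall i, a 0 i = 0) -> enorm a = 0.
Proof.
by move=> a0; rewrite /enorm big1 ?sqrtr0 // => i _; rewrite a0 expr0n.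
Qed.

End Helpers.

Theorem mainTheorem4 (R : rcfType) (N : nat)
    (gam : 'I_N -> 'I_N -> R -> R) (mu : 'I_N -> 'rV[R]_N -> R)
    (k0 kG kh delta : R) (c : 'rV[R]_N) (y : 'I_N.+1 -> 'rV[R]_N * R) :
  (forall i j, Kinf_or_zero (gam i j)) ->
  Gamma_irreducible gam ->
  (forall i, mono_aggr (mu i)) ->
  0 < k0 -> 0 < kh -> kh < kG -> 0 < delta ->
  (forall i, 0 < c 0 i) -> enorm c < kG / 2 ->
  K1_Nsimplex delta y ->
  (forall j, nonneg_vec (y j).1) ->
  (exists istar : 'I_N, forall j, (y j).1 0 istar = 0) ->
  enorm (y ord_max).1 < k0 + kG ->
  ~ complete gam mu k0 kG kh c y.
Proof.
move=> Hg Hirr Hmu k00 kh0 khG d0 c0 cn [z [pi [k Hy]]] Hnn [ist His] Hmax [W [LW Wlex]].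
have lam0 : forall j, 0 <= W j 0.
  move=> j; have [l [Hl Hk]] := Wlex j.
  case: (posnP (val l)) => [l0|lp].
    by apply: ltW; rewrite (_ : 0 = l) //; apply: val_inj.
  by rewrite (Hk 0) // lp.
have sum1 : \sum_j W j 0 = 1.
  have := congr1 (fun M : 'M[R]_N.+1 => M 0 0) LW; rewrite !mxE /= => H.
  rewrite -[RHS]H; apply: eq_bigr => j _; rewrite mxE unlift_none mul1r //.
have sumi : forall i : 'I_N,
    \sum_j label gam mu k0 kG kh c (y j) 0 i * W j 0 = 0.
  move=> i; have := congr1 (fun M : 'M[R]_N.+1 => M (lift ord0 i) 0) LW; rewrite !mxE /= => H.
  rewrite -[RHS]H; apply: eq_bigr => j _; rewrite [in RHS]mxE liftK //.
have t01 : forall j, 0 <= (y j).2 <= 1 by move=> j; rewrite Hy K1_t01.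
have vn : forall j, enorm (y j).1 < k0 + kG.
  move=> j; apply: le_lt_trans Hmax; apply: enorm_le; first exact: Hnn.
  move=> i; rewrite !Hy; apply: K1_mono => //.
  by rewrite /= leq_bump2 -ltnS.
have gam0 : forall i m x, 0 <= x -> 0 <= gam i m x.
  move=> i m x x0; case: (Hg i m) => [[_ _ _ _ H]|H]; first exact: H.
  by rewrite H.
have Gmu0 : forall j i, 0 <= Gamma_mu gam mu (y j).1 0 i.
  move=> j i; rewrite mxE; case: (Hmu i) => _ H _ _ _; apply: H => m.
  by rewrite mxE; apply: gam0; apply: Hnn.
have Fpos : forall j, 0 < 1 + Num.min 0 ((kG - 2 * enorm (y j).1) / (enorm (y j).1 + k0)).
  move=> j; have nj := vn j; have n0 : 0 <= enorm (y j).1 by apply: sqrtr_ge0.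
  rewrite -ltrBlDr sub0r ltrNl lt_min ltrN10 /= ltr_pdivlMr; last by lra.
  lra.
have phiE : forall j i, phi gam mu k0 kG kh (y j).1 0 i =
   (1 + Num.min 0 ((kG - 2 * enorm (y j).1) / (enorm (y j).1 + k0))) *
     Gamma_mu gam mu (y j).1 0 i + Num.max 0 (kh - 2 * enorm (y j).1).
  by move=> j i; rewrite /phi !mxE mulr1.
have phi0 : forall j i, 0 <= phi gam mu k0 kG kh (y j).1 0 i.
  move=> j i; rewrite phiE addr_ge0 //; last by rewrite le_max lexx.
  by rewrite mulr_ge0 // ltW.
have labelE : forall j i, label gam mu k0 kG kh c (y j) 0 i =
    (1 - (y j).2) * c 0 i + (y j).2 * phi gam mu k0 kG kh (y j).1 0 i - (y j).1 0 i.
  by move=> j i; rewrite /label /theta [in RHS]phiE !mxE ?mulr1.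
have key : forall i, (forall j, W j 0 != 0 -> (y j).1 0 i = 0) ->
    forall j, W j 0 != 0 -> phi gam mu k0 kG kh (y j).1 0 i = 0.
  move=> i Zi.
  have g0 : forall j, 0 <= label gam mu k0 kG kh c (y j) 0 i * W j 0.
    move=> j; have [->|nz] := eqVneq (W j 0) 0; first by rewrite mulr0.
    apply: mulr_ge0 => //.
    rewrite labelE Zi // subr0.
    have /andP[t0 t1] := t01 j.
    apply: addr_ge0; apply: mulr_ge0 => //; first by rewrite subr_ge0.
    exact: ltW (c0 i).
  move=> j nz.
  have := psumr_eq0P (fun j _ => g0 j) (sumi i); move=> /(_ j isT).
  move/eqP; rewrite mulf_eq0 (negbTE nz) orbF labelE Zi // subr0.
  have /andP[t0 t1] := t01 j.
  rewrite paddr_eq0; first last.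
  - by apply: mulr_ge0.
  - by apply: mulr_ge0; [rewrite subr_ge0 | exact: ltW (c0 i)].
  move=> /andP[h1 h2]; move: h1; rewrite mulf_eq0 (gt_eqF (c0 i)) orbF subr_eq0 => /eqP t1'.
  by move: h2; rewrite -t1' mul1r => /eqP.
have edge : forall i m, (forall j, W j 0 != 0 -> (y j).1 0 i = 0) ->
    (exists2 s, 0 <= s & gam i m s <> 0) ->
    (forall j, W j 0 != 0 -> (y j).1 0 m = 0).
  move=> i m Zi ed j nz; have := key i Zi j nz; rewrite phiE => /eqP.
  rewrite paddr_eq0; first last.
  - by rewrite le_max lexx.
  - by rewrite mulr_ge0 // ltW.
  move=> /andP[h1 _]; move: h1; rewrite mulf_eq0 (gt_eqF (Fpos j)) /= mxE => /eqP.
  case: (Hmu i) => _ _ H3 _ _.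
  move/(H3 _ _) => hrow.
  have {}hrow : (\row_j0 gam i j0 ((y j).1 0 j0)) = 0.
    by apply: hrow => m'; rewrite mxE; apply: gam0; apply: Hnn.
  have := congr1 (fun r : 'rV[R]_N => r 0 m) hrow; rewrite !mxE => hg.
  case: (Hg i m) => [[_ Hinc _ Hg0 _]| Hz]; last first.
    by case: ed => s s0; rewrite Hz.
  have := Hnn j m; rewrite le_eqVlt => /orP[/eqP<-//|pos].
  by have := Hinc 0 _ (lexx 0) pos; rewrite Hg0 hg ltxx.
have Zall : forall a b, reach (fun j i => exists2 s, 0 <= s & gam i j s <> 0) a b ->
    (forall j, W j 0 != 0 -> (y j).1 0 b = 0) ->
    (forall j, W j 0 != 0 -> (y j).1 0 a = 0).
  move=> a b; elim => // a' b' c' E _ IH Zc; apply: (edge b') => //; exact: IH.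
have [j nz] : exists j, W j 0 != 0.
  case: (pickP (fun j => W j 0 != 0)) => [j nz|all0]; first by exists j.
  move: sum1; rewrite big1 => [/eqP|j _]; first by rewrite eq_sym oner_eq0.
  by have := all0 j => /= /negbFE/eqP.
have := key ist (fun j _ => His j) j nz; rewrite phiE => /eqP.
rewrite paddr_eq0; first last.
- by rewrite le_max lexx.
- by rewrite mulr_ge0 // ltW.
move=> /andP[_]; rewrite enorm0; last first.
  by move=> i; apply: (Zall i ist (Hirr i ist)) => // j' _; apply: His.
by rewrite mulr0 subr0 gt_eqF // lt_max kh0 orbT.
Qed.
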